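(* Let $(V,g)$ be a three-dimensional Lorentzian vector space (signature $(-,+,+)$) with a choice of time orientation, and let $F\in\mathrm{Skew}(V)$, $F\neq0$. Set $\sigma:=-\frac12\mathrm{Tr}(F^2)\in\mathbb{R}$. Then there exists an orthonormal basis $\{e_0,e_1,e_2\}$ of $V$ with $e_0$ timelike and future directed such that $$F(e_0)=\left(-1+\tfrac{\sigma}{4}\right)e_2,\quad F(e_1)=-\left(1+\tfrac{\sigma}{4}\right)e_2,\quad F(e_2)=\left(-1+\tfrac{\sigma}{4}\right)e_0+\left(1+\tfrac{\sigma}{4}\right)e_1.$$
   Context: $\mathrm{Skew}(V)$ denotes the set of endomorphisms $F:V\to V$ with $\langle e,F(e')\rangle=-\langle F(e),e'\rangle$ for all $e,e'\in V$, where $\langle\cdot,\cdot\rangle$ is the inner product of $g$. *)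

(* Defs.v *)
(* V = column vectors 'cV[R]_3 (every 3-dim real vector space),
   with an arbitrary symmetric bilinear form g given by a Gram matrix G. *)
From HB Require Import structures.
From mathcomp Require Import all_boot all_order all_algebra.
From mathcomp Require Import reals.
Set Implicit Arguments. Unset Strict Implicit. Unset Printing Implicit Defensive.
Import Order.TTheory GRing.Theory Num.Theory.
Local Open Scope ring_scope.

Definition gform (R : realType) (G : 'M[R]_3) (u v : 'cV[R]_3) : R :=
  (u^T *m G *m v) 0 0.

Definition eta (R : realType) (i j : 'I_3) : R :=
  if i == j then (if i == 0 then -1 else 1) else 0.

Definition orthonormal_basis (R : realType) (G : 'M[R]_3) (e : 'I_3 -> 'cV[R]_3) :=
  (\matrix_(i < 3, j < 3) e j i 0) \in unitmx /\
  forall i j, gform G (e i) (e j) = eta R i j.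

Definition lorentzian3 (R : realType) (G : 'M[R]_3) :=
  G^T = G /\ exists e, orthonormal_basis G e.

Definition timelike (R : realType) (G : 'M[R]_3) (v : 'cV[R]_3) := gform G v v < 0.

(* a time orientation is given by a timelike vector tau; a timelike v is
   future directed iff it lies in the same cone as tau, i.e. g(v,tau) < 0 *)
Definition future_directed (R : realType) (G : 'M[R]_3) (tau v : 'cV[R]_3) :=
  timelike G v /\ gform G v tau < 0.

Definition skew_op (R : realType) (G : 'M[R]_3) (F : 'M[R]_3) :=
  forall u v : 'cV[R]_3, gform G u (F *m v) = - gform G (F *m u) v.

(* Main.v *)
Require Import Defs.
From HB Require Import structures.
From mathcomp Require Import all_boot all_order all_algebra.
From mathcomp Require Import reals.
From mathcomp Require Import ring lra.
Import Order.TTheory GRing.Theory Num.Theory.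
Local Open Scope ring_scope.
Set Implicit Arguments. Unset Strict Implicit.

Section Aux.
Variable R : realType.
Definition i0 : 'I_3 := ord0.
Definition i1 : 'I_3 := @Ordinal 3 1 isT.
Definition i2 : 'I_3 := @Ordinal 3 2 isT.

Lemma ord3P (i : 'I_3) : [\/ i = i0, i = i1 | i = i2].
Proof.
case: i => [[|[|[|m]]] Hm].
- by apply: Or31; apply/val_inj.
- by apply: Or32; apply/val_inj.
- by apply: Or33; apply/val_inj.
- by [].
Qed.

Lemma sum3 (f : 'I_3 -> R) : \sum_(i < 3) f i = f i0 + f i1 + f i2.
Proof.
rewrite !big_ord_recl big_ord0 addr0 addrA.
congr (_ + _ + _); congr f; exact/val_inj.
Qed.

Definition T3 := (R * R * R)%type.
Definition ip3 (u v : T3) : R := - u.1.1 * v.1.1 + u.1.2 * v.1.2 + u.2 * v.2.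
Definition mv3 (p q r : R) (u : T3) : T3 :=
  (p * u.1.2 + q * u.2, p * u.1.1 + r * u.2, q * u.1.1 - r * u.1.2).
Definition sc3 (a : R) (u : T3) : T3 := (a * u.1.1, a * u.1.2, a * u.2).
Definition ad3 (u v : T3) : T3 := (u.1.1 + v.1.1, u.1.2 + v.1.2, u.2 + v.2).

Definition tovec (u : T3) : 'cV[R]_3 :=
  \col_i (if i == i0 then u.1.1 else if i == i1 then u.1.2 else u.2).
Definition ofvec (v : 'cV[R]_3) : T3 := (v i0 0, v i1 0, v i2 0).

Lemma tovecK (v : 'cV[R]_3) : tovec (ofvec v) = v.
Proof.
apply/matrixP => i j; rewrite (ord1 j) mxE.
by case: (ord3P i) => ->.
Qed.

Definition Eta : 'M[R]_3 := \matrix_(i, j) Defs.eta R i j.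
Definition ipm (u v : 'cV[R]_3) : R := (u^T *m Eta *m v) 0 0.

Lemma ipmE (u v : T3) : ipm (tovec u) (tovec v) = ip3 u v.
Proof.
rewrite /ipm /ip3 !mxE sum3 !mxE !sum3 !mxE /Defs.eta /=.
ring.
Qed.

Lemma mulmx_tovec (M : 'M[R]_3) (u : T3) : M *m tovec u =
  tovec (M i0 i0 * u.1.1 + M i0 i1 * u.1.2 + M i0 i2 * u.2,
         M i1 i0 * u.1.1 + M i1 i1 * u.1.2 + M i1 i2 * u.2,
         M i2 i0 * u.1.1 + M i2 i1 * u.1.2 + M i2 i2 * u.2).
Proof.
apply/matrixP => i j; rewrite (ord1 j) !mxE sum3 !mxE /=.
by case: (ord3P i) => -> /=.
Qed.

Lemma scale_tovec a u : a *: tovec u = tovec (sc3 a u).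
Proof.
apply/matrixP => i j; rewrite (ord1 j) !mxE /=.
by case: (ord3P i) => -> /=.
Qed.

Lemma add_tovec u v : tovec u + tovec v = tovec (ad3 u v).
Proof.
apply/matrixP => i j; rewrite (ord1 j) !mxE /=.
by case: (ord3P i) => -> /=.
Qed.

Lemma EtaEta : Eta *m Eta = 1%:M.
Proof.
apply/matrixP => i j; rewrite !mxE sum3 !mxE /eta.
by case: (ord3P i) => ->; case: (ord3P j) => ->; rewrite /Defs.eta /=; ring.
Qed.

Lemma timelike3 (x t : T3) : ip3 x x < 0 -> ip3 t t < 0 -> ip3 x t != 0.
Proof.
case: x => [[a b] c]; case: t => [[d e] f]; rewrite /ip3 /= => Hx Ht.
apply/eqP => H0.
have H1 : a * d = b * e + c * f by lra.
have H2 : (b * e + c * f) ^+ 2 <= (b^+2 + c^+2) * (e^+2 + f^+2).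
  have : 0 <= (b * f - c * e) ^+ 2 by apply: sqr_ge0.
  lra.
have Hd : 0 < d ^+ 2 by nra.
have H3 : (b^+2 + c^+2) * (e^+2 + f^+2) <= (b^+2 + c^+2) * d^+2.
  apply: ler_wpM2l; nra.
have H4 : (b^+2 + c^+2) * d^+2 < a^+2 * d^+2.
  by rewrite ltr_pM2r //; nra.
have : (a * d) ^+ 2 < (a * d) ^+ 2.
  rewrite {1}H1; nra.
by rewrite ltxx.
Qed.

Section Core.
Variables p q r c s : R.
Definition kk := p * s - q * c + r.
Definition sg := r^+2 - p^+2 - q^+2.
Definition cA := p * c + q * s.
Definition cB := p + r * s.
Definition cC := q - r * c.
Definition m0 := sg + 2 * (p * cB + q * cC).
Definition m1 := sg * c + 2 * (p * cA + r * cC).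
Definition m2 := sg * s + 2 * (q * cA - r * cB).
Definition X0 : T3 := (4 + m0, 4 * c + m1, 4 * s + m2).
Definition X1 : T3 := (4 - m0, 4 * c - m1, 4 * s - m2).
Definition X2 : T3 := (-4 * cA, -4 * cB, -4 * cC).

Definition CS := [\/ c = 1 /\ s = 0, c = -1 /\ s = 0, c = 0 /\ s = 1 | c = 0 /\ s = -1].

Ltac solve_id H := rewrite /X0 /X1 /X2 /m0 /m1 /m2 /cA /cB /cC /kk /sg /ip3 /mv3 /sc3 /ad3 /=;
  case: H => -[-> ->]; try congr (_,_,_); ring.
Ltac solve_fid H := rewrite /X0 /X1 /X2 /m0 /m1 /m2 /cA /cB /cC /kk /sg /ip3 /mv3 /sc3 /ad3 /=;
  case: H => -[-> ->]; try congr (_,_,_); field; rewrite ?pnatr_eq0 //=.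

Lemma I00 : CS -> ip3 X0 X0 = - (16 * kk ^+ 2). Proof. move=> H; solve_id H. Qed.
Lemma I01 : CS -> ip3 X0 X1 = 0. Proof. move=> H; solve_id H. Qed.
Lemma I02 : CS -> ip3 X0 X2 = 0. Proof. move=> H; solve_id H. Qed.
Lemma I10 : CS -> ip3 X1 X0 = 0. Proof. move=> H; solve_id H. Qed.
Lemma I11 : CS -> ip3 X1 X1 = 16 * kk ^+ 2. Proof. move=> H; solve_id H. Qed.
Lemma I12 : CS -> ip3 X1 X2 = 0. Proof. move=> H; solve_id H. Qed.
Lemma I20 : CS -> ip3 X2 X0 = 0. Proof. move=> H; solve_id H. Qed.
Lemma I21 : CS -> ip3 X2 X1 = 0. Proof. move=> H; solve_id H. Qed.
Lemma I22 : CS -> ip3 X2 X2 = 16 * kk ^+ 2. Proof. move=> H; solve_id H. Qed.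
Lemma R0 mu : CS -> mv3 p q r (sc3 mu X0) = sc3 (-1 + sg/4) (sc3 mu X2).
Proof. move=> H; solve_fid H. Qed.
Lemma R1 mu : CS -> mv3 p q r (sc3 mu X1) = sc3 (- (1 + sg/4)) (sc3 mu X2).
Proof. move=> H; solve_fid H. Qed.
Lemma R2 mu : CS -> mv3 p q r (sc3 mu X2) =
  ad3 (sc3 (-1 + sg/4) (sc3 mu X0)) (sc3 (1 + sg/4) (sc3 mu X1)).
Proof. move=> H; solve_fid H. Qed.
End Core.

Lemma ip_sc mu u v : ip3 (sc3 mu u) (sc3 mu v) = mu ^+ 2 * ip3 u v.
Proof. rewrite /ip3 /sc3 /=; ring. Qed.

Lemma pick_cs p q r : ~ (p = 0 /\ q = 0 /\ r = 0) ->
  exists c s, CS c s /\ kk p q r c s != 0.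
Proof.
move=> H.
case: (eqVneq (kk p q r 1 0) 0) => [H1|H1]; last by exists 1, 0; split=> //; apply: Or41.
case: (eqVneq (kk p q r (-1) 0) 0) => [H2|H2]; last by exists (-1), 0; split=> //; apply: Or42.
case: (eqVneq (kk p q r 0 1) 0) => [H3|H3]; last by exists 0, 1; split=> //; apply: Or43.
case: (eqVneq (kk p q r 0 (-1)) 0) => [H4|H4]; last by exists 0, (-1); split=> //; apply: Or44.
exfalso; apply: H; move: H1 H2 H3 H4; rewrite /kk => H1 H2 H3 H4.
split; [|split]; lra.
Qed.
End Aux.

Unset Implicit Arguments. Set Strict Implicit.

Lemma gram (R : realType) (G : 'M[R]_3) (e : 'I_3 -> 'cV[R]_3) :
  (forall i j, gform G (e i) (e j) = Defs.eta R i j) ->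
  (\matrix_(i, j) e j i 0)^T *m G *m (\matrix_(i, j) e j i 0) = Eta R.
Proof.
move=> He; apply/matrixP => i j.
rewrite [RHS]mxE -He /gform !mxE.
apply: eq_bigr => l _; rewrite !mxE; congr (_ * _).
by apply: eq_bigr => k _; rewrite !mxE.
Qed.

Theorem corollary2p3 (R : realType) (G : 'M[R]_3) (tau : 'cV[R]_3)
  (F : 'M[R]_3) :
  lorentzian3 G -> timelike G tau -> skew_op G F -> F != 0 ->
  let sigma := - (1 / 2) * mxtrace (F *m F) in
  exists e : 'I_3 -> 'cV[R]_3,
    orthonormal_basis G e /\ future_directed G tau (e 0) /\
    F *m e 0 = (-1 + sigma / 4) *: e 2 /\
    F *m e 1 = - (1 + sigma / 4) *: e 2 /\
    F *m e 2 = (-1 + sigma / 4) *: e 0 + (1 + sigma / 4) *: e 1.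
Proof.
move=> [GT [e' [HPu He']]] Htau Hsk HF0 sigma.
set P := \matrix_(i, j) e' j i 0 in HPu.
have HP : P^T *m G *m P = Eta R := @gram R G e' He'.
have gP : forall u v, gform G (P *m u) (P *m v) = ipm u v.
  by move=> u v; rewrite /gform /ipm -HP trmx_mul; congr (fun_of_matrix _ 0 0); rewrite !mulmxA.
set M := invmx P *m F *m P.
have HFP : forall v : 'cV[R]_3, F *m (P *m v) = P *m (M *m v).
  by move=> v; rewrite /M !mulmxA mulmxV // mul1mx.
have FE : F = P *m M *m invmx P.
  by rewrite /M !mulmxA mulmxV // mul1mx mulmxK.
clearbody M.
have SK : forall u v : 'cV[R]_3, ipm u (M *m v) = - ipm (M *m u) v.
  by move=> u v; rewrite -!gP -!HFP; exact: Hsk.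
have E00 : M i0 i0 = 0.
  by have := SK (tovec (1,0,0)) (tovec (1,0,0)); rewrite !mulmx_tovec !ipmE /ip3 /=; lra.
have E11 : M i1 i1 = 0.
  by have := SK (tovec (0,1,0)) (tovec (0,1,0)); rewrite !mulmx_tovec !ipmE /ip3 /=; lra.
have E22 : M i2 i2 = 0.
  by have := SK (tovec (0,0,1)) (tovec (0,0,1)); rewrite !mulmx_tovec !ipmE /ip3 /=; lra.
have E10 : M i1 i0 = M i0 i1.
  by have := SK (tovec (1,0,0)) (tovec (0,1,0)); rewrite !mulmx_tovec !ipmE /ip3 /=; lra.
have E20 : M i2 i0 = M i0 i2.
  by have := SK (tovec (1,0,0)) (tovec (0,0,1)); rewrite !mulmx_tovec !ipmE /ip3 /=; lra.
have E21 : M i2 i1 = - M i1 i2.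
  by have := SK (tovec (0,1,0)) (tovec (0,0,1)); rewrite !mulmx_tovec !ipmE /ip3 /=; lra.
set p := M i0 i1 in E10 *.
set q := M i0 i2 in E20 *.
set r := M i1 i2 in E21 *.
have Mform : forall u, M *m tovec u = tovec (mv3 p q r u).
  move=> u; rewrite mulmx_tovec E00 E11 E22 E10 E20 E21 /mv3; congr tovec.
  rewrite /p /q /r; congr (_, _, _); ring.
have Ftr : mxtrace (F *m F) = mxtrace (M *m M).
  rewrite FE !mulmxA mxtrace_mulC !mulmxA mulVmx // mul1mx.
  by rewrite -(mulmxA M) mulVmx // mulmx1.
have Tr : mxtrace (M *m M) = -2 * sg p q r.
  rewrite /mxtrace sum3 !mxE !sum3 E00 E11 E22 E10 E20 E21 /sg /p /q /r; ring.
have Hsig : sigma = sg p q r.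
  by rewrite /sigma Ftr Tr; field.
have Hpqr : ~ (p = 0 /\ q = 0 /\ r = 0).
  move=> [p0 [q0 r0]]; move/eqP: HF0; apply.
  have M0 : M = 0.
    apply/matrixP => i j; rewrite mxE.
    by case: (ord3P i) => ->; case: (ord3P j) => ->;
      rewrite ?E00 ?E11 ?E22 ?E10 ?E20 ?E21 -/p -/q -/r ?p0 ?q0 ?r0 ?oppr0.
  by rewrite FE M0 mulmx0 mul0mx.
have [c [s [Hcs Hk]]] := pick_cs Hpqr.
set k := kk p q r c s in Hk.
pose Y0 := X0 p q r c s; pose Y1 := X1 p q r c s; pose Y2 := X2 p q r c s.
pose mu0 := 1 / (4 * k).
have Hmu0 : mu0 ^+ 2 * (16 * k ^+ 2) = 1 by rewrite /mu0; field.
pose t := invmx P *m tau.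
have Ht : tau = P *m tovec (ofvec t) by rewrite tovecK /t mulKVmx.
pose w := ip3 (sc3 mu0 Y0) (ofvec t).
have Hw : w != 0.
  apply: timelike3.
    by rewrite ip_sc /Y0 I00 // mulrN Hmu0 ltrN10.
  by rewrite -ipmE tovecK -gP /t mulKVmx.
pose eps : R := if w < 0 then 1 else -1.
have Heps : eps ^+ 2 = 1 by rewrite /eps; case: ifP => _; rewrite ?expr1n ?sqrrN ?expr1n.
pose mu := eps * mu0.
have Hmu : mu ^+ 2 * (16 * k ^+ 2) = 1.
  by rewrite /mu exprMn -mulrA Hmu0 Heps mulr1.
pose e := fun i : 'I_3 => P *m tovec (sc3 mu (if i == i0 then Y0 else if i == i1 then Y1 else Y2)).
have He0 : e 0 = P *m tovec (sc3 mu Y0) by [].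
have He1 : e 1 = P *m tovec (sc3 mu Y1) by [].
have He2 : e 2 = P *m tovec (sc3 mu Y2) by [].
have Hg : forall i j, gform G (e i) (e j) = Defs.eta R i j.
  move=> i j; rewrite /e gP ipmE ip_sc.
  case: (ord3P i) => ->; case: (ord3P j) => -> /=; rewrite /Defs.eta /= /Y0 /Y1 /Y2.
  - by rewrite I00 // mulrN Hmu.
  - by rewrite I01 // mulr0.
  - by rewrite I02 // mulr0.
  - by rewrite I10 // mulr0.
  - by rewrite I11 // Hmu.
  - by rewrite I12 // mulr0.
  - by rewrite I20 // mulr0.
  - by rewrite I21 // mulr0.
  - by rewrite I22 // Hmu.
exists e; split; [split|split; [split|]].
- have HE := @gram R G e Hg.
  have : (Eta R *m (\matrix_(i, j) e j i 0)^T *m G) *m (\matrix_(i, j) e j i 0) = 1%:M.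
    by rewrite -!mulmxA (mulmxA _ G) HE EtaEta.
  by case/mulmx1_unit.
- exact: Hg.
- by rewrite /timelike Hg /Defs.eta /= ltrN10.
- rewrite He0 Ht gP ipmE.
  have -> : ip3 (sc3 mu Y0) (ofvec t) = eps * w by rewrite /mu /w /ip3 /sc3 /=; ring.
  rewrite /eps; case: ifP => Hlt; first by rewrite mul1r.
  rewrite mulN1r oppr_lt0 lt_neqAle eq_sym Hw /=.
  by rewrite leNgt Hlt.
- rewrite Hsig He0 He1 He2 !HFP !Mform !scalemxAr -mulmxDr !scale_tovec add_tovec.
  by rewrite /Y0 /Y1 /Y2 R0 // R1 // R2.
Qed.
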